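(* Consider a single flow on a route of $n$ links $\mathcal{T}_0,\dots,\mathcal{T}_{n-1}$ under the $\phi$-hop interference model, $0\le\phi\le n-1$, with slice widths $w_0=w_1=\dots=w_{n-1}$ all equal. Then the Ordered Round-Robin policy $ORR$ is both throughput-optimal and deadline-optimal.
   Context: Time is slotted. Under $\phi$-hop interference on the line, distinct links $\mathcal{T}_j,\mathcal{T}_{j'}$ cannot be active in the same slot if $|j-j'|\le\phi$. Each link $\mathcal{T}_j$ has a slice of width $w_j$ for the flow with a FCFS queue; the flow has deterministic fluid arrival rate $\lambda>0$ per slot. Units arriving in slot $t$ are available at the first link from slot $t+1$; an activated link serves $\min\{Q,w_j\}$ from its queue of size $Q$; units served at a link in slot $t$ are available at the next link from slot $t+1$; a packet's delay is the slot in which it is served at the last link minus its arrival slot. Policies are admissible (respect interference, work-conserving) and cyclic with period $K^\pi$; $\bar{\mu}^\pi_e=\frac1{K^\pi}\sum_{t=0}^{K^\pi-1}\mu^\pi_e(t)$ is the activation rate of link $e$. Throughput: $\lambda^*(\pi,\boldsymbol{w})=\min_e\bar{\mu}^\pi_e w_e$; $\pi$ is throughput-optimal for $\boldsymbol{w}$ if $\lambda^*(\pi,\boldsymbol{w})\ge\lambda^*(\pi',\boldsymbol{w})$ for all cyclic admissible $\pi'$. Deadlines: $\tau^*(\pi,\boldsymbol{w},\lambda)$ is the maximum packet delay under $\pi$, $\tau^*(\pi)=\lim_{\lambda\to0}\tau^*(\pi,\boldsymbol{w},\lambda)$, and $\pi$ is deadline-optimal if $\tau^*(\pi)\le\tau^*(\pi')$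 for all cyclic admissible $\pi'$. The $ORR$ policy has period $\phi+1$ and in slot $t$ activates every link $\mathcal{T}_j$ with $j\equiv t\pmod{\phi+1}$. *)

(* Defs.v *)
From HB Require Import structures.
From mathcomp Require Import all_boot all_order all_algebra.
From mathcomp Require Import all_classical all_reals all_analysis.
Set Implicit Arguments. Unset Strict Implicit. Unset Printing Implicit Defensive.
Import Order.TTheory GRing.Theory Num.Theory.
Import numFieldNormedType.Exports.
Local Open Scope classical_set_scope.
Local Open Scope ring_scope.

(* Links of the route are indexed by 0, ..., n-1 (nat indices; indices >= n
   are irrelevant). *)
Record policy := Policy { pol_period : nat; pol_act : nat -> nat -> bool }.

Definition active (pi : policy) (t j : nat) : bool :=
  pol_act pi (t %% pol_period pi)%N j.

(* Admissible: positive period, and phi-hop interference respected: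
   two distinct links T_j, T_j' active in the same slot satisfy |j-j'| > phi. *)
Definition admissible (n phi : nat) (pi : policy) : Prop :=
  (0 < pol_period pi)%N /\
  forall t j j', (j < n)%N -> (j' < n)%N -> j != j' ->
    active pi t j -> active pi t j' -> (phi < (j - j') + (j' - j))%N.

Definition ORR (phi : nat) : policy :=
  Policy phi.+1 (fun t j => (j %% phi.+1 == t %% phi.+1)%N).

Section Model.
Variable R : realType.

Definition mubar (pi : policy) (e : nat) : R :=
  (\sum_(t < pol_period pi) (pol_act pi t e : nat))%:R / (pol_period pi)%:R.

(* lambda^*(pi, w) = min_{e < n} mubar_e * w_e  (n > 0 assumed by users) *)
Definition lamstar (n : nat) (pi : policy) (w : nat -> R) : R :=
  \big[Order.min/ mubar pi 0 * w 0%N]_(e < n) (mubar pi e * w e).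

Definition throughput_optimal (n phi : nat) (w : nat -> R) (pi : policy) : Prop :=
  forall pi', admissible n phi pi' -> lamstar n pi' w <= lamstar n pi w.

(* Fluid dynamics.  [cum pi w lam t j] = total amount served by link j in
   slots 0, ..., t-1.  Queue of link j at the start of slot t: arrivals
   (lam per slot) of slots < t minus served, for j = 0; served by link j-1
   in slots < t minus served by link j, for j > 0.  An activated link serves
   min(Q, w_j) (work-conserving). *)
Definition queue (lam : R) (c : nat -> R) (t j : nat) : R :=
  (if j is j'.+1 then c j' else lam * t%:R) - c j.

Fixpoint cum (pi : policy) (w : nat -> R) (lam : R) (t : nat) : nat -> R :=
  match t with
  | 0 => fun _ => 0
  | t'.+1 => let c := cum pi w lam t' in
      fun j => c j + (if active pi t' j then Num.min (queue lam c t' j) (w j) else 0)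
  end.

(* Unit x > 0 (cumulative arrival index)
   arrives in slot t with lam*t < x <= lam*(t+1); it is served at the last
   link T_{n-1} in the first slot s with cum (s+1) (n-1) >= x; its delay is
   s - t. *)
Definition delays (n : nat) (pi : policy) (w : nat -> R) (lam : R) : set (\bar R) :=
  [set d | exists x : R, exists t s : nat,
     [/\ 0 < x, lam * t%:R < x & x <= lam * t.+1%:R] /\
     [/\ x <= cum pi w lam s.+1 n.-1,
         (forall s', (s' < s)%N -> cum pi w lam s'.+1 n.-1 < x) &
         d = (s%:R - t%:R)%:E]]
  `|` [set d | d = +oo%E /\ exists x : R, 0 < x /\ forall s, cum pi w lam s.+1 n.-1 < x].

Definition maxdelay (n : nat) (pi : policy) (w : nat -> R) (lam : R) : \bar R :=
  ereal_sup (delays n pi w lam).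

Definition taustar (n : nat) (pi : policy) (w : nat -> R) : \bar R :=
  lim (maxdelay n pi w lam @[lam --> 0^'+]).

Definition deadline_optimal (n phi : nat) (w : nat -> R) (pi : policy) : Prop :=
  forall pi', admissible n phi pi' -> (taustar n pi w <= taustar n pi' w)%E.

End Model.

(* Main.v *)
Require Import Defs.
From HB Require Import structures.
From mathcomp Require Import all_boot all_order all_algebra.
From mathcomp Require Import all_classical all_reals all_analysis.
From mathcomp Require Import zify ring lra.
Import Order.TTheory GRing.Theory Num.Theory.
Set Implicit Arguments. Unset Strict Implicit. Unset Printing Implicit Defensive.

Definition Acnt (pi : policy) : nat -> nat -> nat :=
  fix A j := match j with
  | 0 => fun s => s
  | j'.+1 => fix B s := match s with
     | 0 => 0
     | s'.+1 => if active pi s' j' then A j' s' else B s' end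
  end.

Lemma Acnt0 pi s : Acnt pi 0 s = s. Proof. by []. Qed.
Lemma AcntS0 pi j : Acnt pi j.+1 0 = 0. Proof. by []. Qed.
Lemma AcntSS pi j s : Acnt pi j.+1 s.+1 =
  if active pi s j then Acnt pi j s else Acnt pi j.+1 s.
Proof. by []. Qed.

Lemma Acnt_props pi j :
  {homo Acnt pi j : s s' / (s <= s')%N} /\ forall s, (Acnt pi j.+1 s <= Acnt pi j s)%N.
Proof.
elim: j => [|j [mon hle]].
  split; first by move=> s s'.
  by elim=> [//|s IH]; rewrite AcntSS !Acnt0 in IH *; case: ifP => _; lia.
have mon' : {homo Acnt pi j.+1 : s s' / (s <= s')%N}.
  have st : forall s, (Acnt pi j.+1 s <= Acnt pi j.+1 s.+1)%N.
    by move=> s; rewrite [X in (_ <= X)%N]AcntSS; case: ifP => _ //; apply: hle.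
  move=> s s' /subnK <-; elim: (s' - s)%N => [//|d IH].
  by apply: leq_trans IH (st _).
split=> // s; elim: s => [//|s IH].
rewrite AcntSS [Acnt pi j.+1 s.+1]AcntSS.
case: ifP => _; case: ifP => _.
- exact: (hle s).
- by [].
- exact: leq_trans IH (hle s).
- exact: IH.
Qed.

Lemma Acnt_mono pi j : {homo Acnt pi j : s s' / (s <= s')%N}.
Proof. by case: (Acnt_props pi j). Qed.
Lemma Acnt_leS pi j s : (Acnt pi j.+1 s <= Acnt pi j s)%N.
Proof. by case: (Acnt_props pi j). Qed.
Lemma Acnt_le pi j s : (Acnt pi j s <= s)%N.
Proof. elim: j => [//|j IH]; exact: leq_trans (Acnt_leS _ _ _) IH. Qed.

Lemma Acnt_lower pi n :
  (forall j, (j < n)%N -> forall s, exists u, (s <= u < s + pol_period pi)%N /\ active pi u j) ->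
  forall j, (j <= n)%N -> forall s, (s - j * pol_period pi <= Acnt pi j s)%N.
Proof.
move=> H; elim=> [_ s|j IH jn s]; first by rewrite mul0n subn0.
set K := pol_period pi.
case: (leqP s (j.+1 * K)) => hs; first by rewrite (eqP (_ : s - _ == 0)%N) //; rewrite subn_eq0.
have [u [/andP [u1 u2] act]] := H j jn (s - K)%N.
have h1 : (Acnt pi j.+1 u.+1 <= Acnt pi j.+1 s)%N by apply: Acnt_mono; lia.
rewrite AcntSS act in h1.
have h2 := IH (ltnW jn) u.
rewrite mulSn in hs *; lia.
Qed.

Section Fluid.
Variable R : realType.
Local Open Scope ring_scope.

Lemma cum_eq (pi : policy) (w : nat -> R) (lam : R) (n : nat) :
  (forall j, (j < n)%N -> forall s, exists u, (s <= u < s + pol_period pi)%N /\ active pi u j) ->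
  0 < lam -> (forall j, (j < n)%N -> lam * (n * pol_period pi)%:R <= w j) ->
  forall s j, (j < n)%N -> cum pi w lam s j = lam * (Acnt pi j.+1 s)%:R.
Proof.
move=> H lam0 hw; elim=> [j _|s IH j jn]; first by rewrite /= mulr0.
rewrite AcntSS.
have -> : cum pi w lam s.+1 j = cum pi w lam s j +
  (if active pi s j then Num.min (queue lam (cum pi w lam s) s j) (w j) else 0) by [].
rewrite IH //.
have hq : queue lam (cum pi w lam s) s j = lam * (Acnt pi j s - Acnt pi j.+1 s)%:R.
  rewrite /queue natrB ?Acnt_leS // mulrBr IH //.
  by case: j jn {hw} => [|j] jn //=; rewrite IH //; lia.
case: ifP => act; last by rewrite addr0.
rewrite hq min_l.
  by rewrite -mulrDr -natrD subnKC // Acnt_leS.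
apply: le_trans (hw j jn); rewrite ler_pM2l // ler_nat.
have h1 := Acnt_le pi j s.
have h2 := Acnt_lower H jn s.
have : (j.+1 * pol_period pi <= n * pol_period pi)%N by rewrite leq_mul2r jn orbT.
lia.
Qed.


Definition Eset (pi : policy) (n : nat) : set (\bar R) :=
  [set d | exists t s : nat, [/\ (t < Acnt pi n s.+1)%N,
     (forall s', (s' < s)%N -> (Acnt pi n s'.+1 <= t)%N) & d = (s%:R - t%:R)%:E]].

Lemma delays_eq (pi : policy) (w : nat -> R) (lam : R) (n : nat) :
  (0 < n)%N ->
  (forall j, (j < n)%N -> forall s, exists u, (s <= u < s + pol_period pi)%N /\ active pi u j) ->
  0 < lam -> (forall j, (j < n)%N -> lam * (n * pol_period pi)%:R <= w j) ->
  delays n pi w lam = Eset pi n.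
Proof.
move=> n0 H lam0 hw.
have ce : forall s, cum pi w lam s n.-1 = lam * (Acnt pi n s)%:R.
  by move=> s; rewrite (cum_eq H lam0 hw) ?prednK // ltn_predL.
rewrite /delays /Eset; apply/seteqP; split => d.
- case=> [[x [t [s [[x0 xl xu] [xc xmin ->]]]]] | [_ [x [x0 hx]]]].
  + exists t, s; split => //.
    * rewrite ce in xc.
      have : lam * t%:R < lam * (Acnt pi n s.+1)%:R by apply: lt_le_trans xc.
      by rewrite ltr_pM2l // ltr_nat.
    * move=> s' ss'; have := xmin s' ss'; rewrite ce => h.
      have : lam * (Acnt pi n s'.+1)%:R < lam * t.+1%:R by apply: lt_le_trans xu.
      by rewrite ltr_pM2l // ltr_nat ltnS.
  + exfalso.
    set N := Num.Def.trunc (x / lam).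
    have hN := truncnS_gt (x / lam).
    have := hx (N + n * pol_period pi)%N.
    rewrite ce; apply/negP; rewrite -leNgt.
    have h1 : (N.+1 <= Acnt pi n (N + n * pol_period pi).+1)%N.
      have := Acnt_lower H (leqnn n) (N + n * pol_period pi).+1; lia.
    have : x < lam * N.+1%:R by rewrite mulrC -ltr_pdivrMr.
    move=> /ltW /le_trans; apply.
    by rewrite ler_pM2l // ler_nat.
- case=> t [s [h1 h2 ->]]; left.
  exists (lam * t.+1%:R), t, s; split; split => //.
  + by rewrite mulr_gt0.
  + by rewrite ltr_pM2l // ltr_nat.
  + by rewrite ce ler_pM2l // ler_nat.
  + move=> s' ss'; rewrite ce ltr_pM2l // ltr_nat ltnS; exact: h2.
Qed.


Lemma taustar_eq (pi : policy) (w : nat -> R) (n : nat) :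
  (0 < n)%N -> (0 < pol_period pi)%N ->
  (forall j, (j < n)%N -> forall s, exists u, (s <= u < s + pol_period pi)%N /\ active pi u j) ->
  0 < w 0%N -> (forall j, (j < n)%N -> w 0%N <= w j) ->
  taustar n pi w = ereal_sup (Eset pi n).
Proof.
move=> n0 K0 H w0 hw.
have e0 : 0 < w 0%N / (n * pol_period pi)%:R by rewrite divr_gt0 // ltr0n muln_gt0 n0.
rewrite /taustar; apply: (@lim_near_cst _ (@ereal_hausdorff R)).
near=> lam.
have lam0 : 0 < lam by near: lam; exact: nbhs_right_gt.
have lame : lam < w 0%N / (n * pol_period pi)%:R by near: lam; exact: nbhs_right_lt.
rewrite /maxdelay (delays_eq n0 H lam0) //.
move=> j jn; apply: le_trans (hw j jn).
rewrite -ler_pdivlMr ?ltr0n ?muln_gt0 ?n0 //; exact: ltW.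
Unshelve. all: end_near.
Qed.


Lemma taustar_inf (pi : policy) (w : nat -> R) (n j0 : nat) :
  (0 < n)%N -> (j0 < n)%N -> (forall t, ~~ active pi t j0) ->
  (forall j, (j < n)%N -> 0 < w j) ->
  taustar n pi w = +oo%E.
Proof.
move=> n0 j0n nact wpos.
have cz : forall lam s j, (j0 <= j < n)%N -> cum pi w lam s j = 0.
  move=> lam; elim=> [//|s IH] j /andP [j0j jn].
  have -> : cum pi w lam s.+1 j = cum pi w lam s j +
    (if active pi s j then Num.min (queue lam (cum pi w lam s) s j) (w j) else 0) by [].
  rewrite IH ?j0j // add0r.
  case: (eqVneq j j0) => [->|ne]; first by rewrite (negbTE (nact s)).
  have hlt : (j0 < j)%N by rewrite ltn_neqAle eq_sym ne j0j.
  case: ifP => // _.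
  rewrite /queue; case: j hlt jn j0j ne => // j hlt jn _ _.
  rewrite (IH j); last by apply/andP; split; lia.
  rewrite (IH j.+1); last by apply/andP; split; lia.
  by rewrite subr0 min_l // ltW // wpos.
rewrite /taustar; apply: (@lim_near_cst _ (@ereal_hausdorff R)).
apply: nearW => lam; rewrite /maxdelay; apply: ereal_supy.
right; split => //; exists 1; split => // s.
rewrite cz ?ltr01 //; apply/andP; split; last by rewrite ltn_predL.
by rewrite -ltnS prednK.
Qed.

End Fluid.

Lemma slot_le1 n phi pi t : admissible n phi pi -> (phi < n)%N ->
  (\sum_(e < phi.+1) (active pi t e : nat) <= 1)%N.
Proof.
move=> [K0 adm] phin.
case: (pickP (fun e : 'I_phi.+1 => active pi t e)) => [e0 He0|none]; last first.
  by rewrite big1 // => e _; rewrite none.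
rewrite (bigD1 e0) //= He0 big1 // => e ne.
apply/eqP; rewrite eqb0; apply/negP => act.
have := adm t e e0; rewrite ne act He0.
have he := ltn_ord e; have he0 := ltn_ord e0.
move=> /(_ ltac:(lia) ltac:(lia) isT isT isT); lia.
Qed.

Lemma active_mod pi t : (0 < pol_period pi)%N ->
  active pi (t %% pol_period pi) = active pi t.
Proof. by move=> K0; rewrite /active modn_mod. Qed.

Lemma all_active_window pi j : (0 < pol_period pi)%N -> (exists t, active pi t j) ->
  forall s, exists u, (s <= u < s + pol_period pi)%N /\ active pi u j.
Proof.
move=> K0 [t0 act] s; set K := pol_period pi.
set u0 := (t0 %% K)%N.
have u0K : (u0 < K)%N by rewrite ltn_mod.
exists (s + (u0 + K - s %% K) %% K)%N; split.
  by have := ltn_mod (u0 + K - s %% K) K; rewrite K0; lia.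
have -> : active pi (s + (u0 + K - s %% K) %% K) j = active pi t0 j; last by [].
rewrite -(active_mod _ K0) -[in RHS](active_mod _ K0); congr (active _ _ _).
rewrite modnDmr.
have hs := divn_eq s K.
have hr := ltn_mod s K; rewrite K0 in hr.
have -> : (s + (u0 + K - s %% K) = (s %/ K).+1 * K + u0)%N by rewrite mulSn; lia.
by rewrite modnMDl modn_mod.
Qed.

Lemma last_act pi k a : active pi a k ->
  forall c, (a <= c)%N -> exists u, [/\ (a <= u <= c)%N, active pi u k &
     forall v, (u < v <= c)%N -> ~~ active pi v k].
Proof.
move=> act; elim=> [|c IH] hc.
  exists a; split; [lia | by [] | move=> v; lia].
case: (leqP a c) => hac; last first.
  have -> : a = c.+1 by lia.
  exists c.+1; split; [lia | by rewrite -(_ : a = c.+1) //; lia | move=> v; lia].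
have [u [hu actu hv]] := IH hac.
case actc: (active pi c.+1 k).
  exists c.+1; split; [lia | by [] | move=> v; lia].
exists u; split => //; first lia.
move=> v hv'; case: (eqVneq v c.+1) => [->|ne]; first by rewrite actc.
apply: hv; lia.
Qed.

Lemma gap_exists n phi pi : admissible n phi pi -> (phi < n)%N ->
  (forall j, (j < n)%N -> exists t, active pi t j) ->
  exists k a, [/\ (k <= phi)%N, (phi <= a)%N, active pi a k &
     forall i, (a < i <= a + phi)%N -> ~~ active pi i k].
Proof.
move=> adm phin allact.
have K0 := adm.1; set K := pol_period pi.
case: (pselect (exists k a, [/\ (k <= phi)%N, (phi <= a)%N, active pi a k &
     forall i, (a < i <= a + phi)%N -> ~~ active pi i k])) => // nE.
exfalso.
have nxt : forall k a, (k <= phi)%N -> (phi <= a)%N -> active pi a k ->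
    exists i, (a < i <= a + phi)%N /\ active pi i k.
  move=> k a kp pa act.
  case: (boolP [exists i : 'I_(phi.+1), (0 < i)%N && active pi (a + i) k]).
    move=> /existsP [i /andP [i0 acti]]; exists (a + i)%N; split => //.
    have := ltn_ord i; lia.
  move=> /existsPn nex; apply: False_ind; apply: nE; exists k, a; split => //.
  move=> i /andP [ai ia]; have := nex (Ordinal (_ : (i - a < phi.+1)%N)).
  move=> /(_ ltac:(lia)) /=; rewrite subnKC ?(ltnW ai) //.
  by rewrite negb_and; case/orP => //; lia.
set c := (phi + K)%N.
have each : forall k : 'I_phi.+1,
    (1 <= \sum_(c.+1 <= i < (c + phi).+1) (active pi i k : nat))%N.
  move=> k; have kp := ltn_ord k.
  have [ak [/andP [ak1 ak2] actk]] := all_active_window K0 (allact k ltac:(lia)) phi.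
  have akc : (ak <= c)%N by rewrite /c /K; lia.
  have [u [/andP [u1 u2] actu hv]] := last_act actk akc.
  have [i [/andP [ui iu] acti]] := nxt k u ltac:(lia) ltac:(lia) actu.
  have ci : (c < i)%N.
    case: (leqP i c) => // ic; have := hv i; rewrite acti; move=> /(_ ltac:(lia)) //.
  rewrite (bigD1_seq i) /= ?mem_index_iota ?iota_uniq ?acti //; lia.
have lo : (phi.+1 <= \sum_(k < phi.+1) \sum_(c.+1 <= i < (c + phi).+1) (active pi i k : nat))%N.
  apply: (@leq_trans (\sum_(k < phi.+1) 1)%N).
    by rewrite sum_nat_const card_ord muln1.
  by apply: leq_sum => k _; exact: each.
have hi : (\sum_(k < phi.+1) \sum_(c.+1 <= i < (c + phi).+1) (active pi i k : nat) <= phi)%N.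
  rewrite exchange_big /=.
  apply: (@leq_trans (\sum_(c.+1 <= i < (c + phi).+1) 1)%N).
    by apply: leq_sum => i _; exact: (slot_le1 i adm phin).
  by rewrite sum_nat_const_nat; lia.
lia.
Qed.

Lemma Acnt_pass pi j u t : (t < Acnt pi j.+1 u)%N ->
  exists v, [/\ (v < u)%N, active pi v j & (t < Acnt pi j v)%N].
Proof.
elim: u => [//|u IH]; rewrite AcntSS; case: ifP => act h.
  by exists u.
by have [v [h1 h2 h3]] := IH h; exists v; split => //; lia.
Qed.

Lemma lower_gap pi phi k a : (k <= a)%N -> active pi a k ->
  (forall i, (a < i <= a + phi)%N -> ~~ active pi i k) ->
  forall j v, (a - k < Acnt pi j v)%N ->
    (a - k + j + 1 + (if (k < j)%N then phi else 0) <= v)%N.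
Proof.
move=> ka act gap; elim=> [v|j IH u]; first by rewrite Acnt0 addn0 addn1 addn0.
move=> /Acnt_pass [v [vu actv hv]].
have := IH v hv.
case: (ltngtP k j) => hkj.
- rewrite (_ : (k < j.+1)%N) //; last lia. lia.
- rewrite (_ : (k < j.+1)%N = false); last lia. lia.
- subst j; rewrite ltnSn addn0 => hv'.
  case: (leqP v (a + phi)) => hva.
    by have := gap v; rewrite actv; move=> /(_ ltac:(lia)).
  lia.
Qed.

Lemma ORR_active phi t j : active (ORR phi) t j = (j %% phi.+1 == t %% phi.+1)%N.
Proof. by rewrite /active /= modn_mod. Qed.

Lemma ORR_adm n phi : admissible n phi (ORR phi).
Proof.
split => // t j j' jn j'n ne; rewrite !ORR_active => /eqP h1 /eqP h2.
have : (j %% phi.+1 = j' %% phi.+1)%N by rewrite h1 h2.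
wlog lt : j j' {jn j'n h1 h2} ne / (j < j')%N.
  move=> W; case: (ltngtP j j') => hl.
  - exact: W.
  - by move=> h; have := W j' j; rewrite eq_sym ne => /(_ isT hl (esym h)); lia.
  - by rewrite hl eqxx in ne.
have [d ->] : exists d, j' = (j + d.+1)%N by exists (j' - j).-1; lia.
move=> h.
have hd : (d.+1 %% phi.+1 = 0)%N.
  apply/eqP; rewrite -[0%N](mod0n phi.+1) -(eqn_modDl j) addn0 h eqxx //.
have : (phi.+1 %| d.+1)%N by rewrite /dvdn hd.
move=> /dvdn_leq => /(_ isT); lia.
Qed.

Lemma ORR_pass phi t j :
  (t < Acnt (ORR phi) j.+1 ((t %/ phi.+1).+1 * phi.+1 + j).+1)%N.
Proof.
set s0 := ((t %/ phi.+1).+1 * phi.+1)%N.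
elim: j => [|j IH].
  rewrite addn0 AcntSS ORR_active /s0 modnMl mod0n eqxx Acnt0.
  exact: ltn_ceil.
rewrite AcntSS ORR_active addnS -addnS /s0 modnMDl eqxx.
by rewrite addnS.
Qed.

Section Bounds.
Variable R : realType.
Local Open Scope ring_scope.

Lemma Eset_ORR_ub phi n : (0 < n)%N -> forall d, @Eset R (ORR phi) n d ->
  (d <= (n + phi)%:R%:E)%E.
Proof.
move=> n0 d [t [s [h1 h2 ->]]].
set s0 := ((t %/ phi.+1).+1 * phi.+1)%N.
have hp := ORR_pass phi t n.-1; rewrite prednK // in hp.
have ss : (s <= s0 + n.-1)%N.
  case: (leqP s (s0 + n.-1)) => // hlt.
  by have := h2 _ hlt; rewrite leqNgt hp.
have hs0 : (s0 <= t + phi.+1)%N.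
  rewrite /s0 mulSn addnC leq_add2r; exact: leq_trunc_div.
have ts : (t <= s)%N by have := Acnt_le (ORR phi) n s.+1; lia.
rewrite lee_fin lerBlDl -natrD ler_nat; lia.
Qed.

Lemma Eset_lb n phi pi : admissible n phi pi -> (phi < n)%N ->
  (forall j, (j < n)%N -> exists t, active pi t j) ->
  ((n + phi)%:R%:E <= ereal_sup (@Eset R pi n))%E.
Proof.
move=> adm phin allact.
have K0 := adm.1.
have H : forall j, (j < n)%N -> forall s, exists u, (s <= u < s + pol_period pi)%N /\ active pi u j.
  by move=> j jn; apply: all_active_window => //; exact: allact.
have [k [a [kp pa acta gap]]] := gap_exists adm phin allact.
set t := (a - k)%N.
have ex : exists s, (t < Acnt pi n s.+1)%N.
  exists (t + n * pol_period pi)%N.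
  have := Acnt_lower H (leqnn n) (t + n * pol_period pi).+1; lia.
have [s hs hmin] := ex_minnP ex.
have lb := lower_gap (_ : (k <= a)%N) acta gap hs.
rewrite (_ : (k < n)%N) in lb; last lia.
apply: le_ereal_sup_tmp; exists (s%:R - t%:R)%:E.
  exists t, s; split => // s' hs'; rewrite leqNgt; apply/negP => h.
  by have := hmin s' h; lia.
rewrite lee_fin lerBrDl -natrD ler_nat; lia.
Qed.

End Bounds.

Lemma count_ORR phi e : (\sum_(t < phi.+1) (pol_act (ORR phi) t e : nat) = 1)%N.
Proof.
have hl : (e %% phi.+1 < phi.+1)%N by rewrite ltn_mod.
rewrite (bigD1 (Ordinal hl)) //= modn_mod eqxx big1 // => t ne.
case: eqP => // h; move: ne; rewrite (modn_small (ltn_ord t)) in h.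
by move=> /eqP []; apply/val_inj; rewrite /= h.
Qed.

Lemma count_small n phi pi : admissible n phi pi -> (phi < n)%N ->
  exists2 e, (e <= phi)%N &
    ((\sum_(t < pol_period pi) (pol_act pi t e : nat)) * phi.+1 <= pol_period pi)%N.
Proof.
move=> adm phin; have K0 := adm.1; set K := pol_period pi.
have tot : (\sum_(e < phi.+1) \sum_(t < K) (pol_act pi t e : nat) <= K)%N.
  rewrite exchange_big /=.
  apply: (@leq_trans (\sum_(t < K) 1)%N); last by rewrite sum_nat_const card_ord muln1.
  apply: leq_sum => t _.
  have -> : \sum_(e < phi.+1) (pol_act pi t e : nat) = \sum_(e < phi.+1) (active pi t e : nat).
    by apply: eq_bigr => e _; rewrite /active modn_small.
  exact: (slot_le1 t adm phin).
case: (pselect (exists2 e, (e <= phi)%N &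
    ((\sum_(t < K) (pol_act pi t e : nat)) * phi.+1 <= K)%N)) => // nE.
exfalso.
have big : forall e : 'I_phi.+1, (K.+1 <= (\sum_(t < K) (pol_act pi t e : nat)) * phi.+1)%N.
  move=> e; rewrite ltnNge; apply/negP => h; apply: nE; exists (val e) => //.
  by have := ltn_ord e.
have : (\sum_(e < phi.+1) K.+1 <= \sum_(e < phi.+1) ((\sum_(t < K) (pol_act pi t e : nat)) * phi.+1))%N.
  by apply: leq_sum => e _; exact: big.
rewrite sum_nat_const card_ord -big_distrl /=.
have := leq_mul2r phi.+1 (\sum_(e < phi.+1) \sum_(t < K) (pol_act pi t e : nat)) K.
rewrite tot /= => h1; lia.
Qed.

Section TP.
Variable R : realType.
Local Open Scope ring_scope.

Lemma lamstar_le (n : nat) pi (w : nat -> R) e : (e < n)%N ->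
  lamstar n pi w <= mubar R pi e * w e.
Proof.
move=> en; rewrite /lamstar (bigD1 (Ordinal en)) //=.
by rewrite ge_min lexx.
Qed.

Lemma lamstar_ORR n phi (w : nat -> R) : (forall e, (e < n)%N -> w e = w 0%N) ->
  lamstar n (ORR phi) w = 1 / phi.+1%:R * w 0%N.
Proof.
move=> we.
have mu : forall e, mubar R (ORR phi) e = 1 / phi.+1%:R by move=> e; rewrite /mubar count_ORR.
rewrite /lamstar mu (eq_bigr (fun _ => 1 / phi.+1%:R * w 0%N)); last first.
  by move=> e _; rewrite mu we.
by elim/big_rec: _ => // i x _ ->; rewrite minxx.
Qed.

Lemma lamstar_opt n phi pi (w : nat -> R) : admissible n phi pi -> (phi < n)%N ->
  (forall e, (e < n)%N -> w e = w 0%N) -> 0 < w 0%N ->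
  lamstar n pi w <= 1 / phi.+1%:R * w 0%N.
Proof.
move=> adm phin we w0.
have K0 := adm.1.
have [e ep hc] := count_small adm phin.
apply: le_trans (lamstar_le pi w (_ : (e < n)%N)) _; first lia.
rewrite we; last lia.
apply: ler_wpM2r; first exact: ltW.
rewrite /mubar ler_pdivrMr ?ltr0n // mul1r mulrC ler_pdivlMr ?ltr0n //.
by rewrite -natrM ler_nat.
Qed.

End TP.
Unset Implicit Arguments. Set Strict Implicit. Set Printing Implicit Defensive.
Local Open Scope ring_scope.

Theorem corollary3 (R : realType) (n phi : nat) (w : nat -> R) :
  (0 < n)%N -> (phi <= n - 1)%N ->
  (forall j, (j < n)%N -> 0 < w j) ->
  (forall j j', (j < n)%N -> (j' < n)%N -> w j = w j') ->
  [/\ admissible n phi (ORR phi),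
      throughput_optimal n phi w (ORR phi) &
      deadline_optimal n phi w (ORR phi)].
Proof.
move=> n0 phin wpos weq.
have phin' : (phi < n)%N by lia.
have we : forall e, (e < n)%N -> w e = w 0%N by move=> e en; apply: weq.
have w0 := wpos 0%N n0.
have wle : forall j, (j < n)%N -> w 0%N <= w j by move=> j jn; rewrite we.
split.
- exact: ORR_adm.
- move=> pi' adm'; rewrite lamstar_ORR //; exact: lamstar_opt.
- move=> pi' adm'.
  have orr_all : forall j, (j < n)%N -> forall s, exists u,
      (s <= u < s + pol_period (ORR phi))%N /\ active (ORR phi) u j.
    move=> j jn; apply: all_active_window => //.
    by exists j; rewrite ORR_active.
  rewrite (taustar_eq n0 _ orr_all w0 wle) //.
  apply: (@le_trans _ _ ((n + phi)%:R%:E)).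
    by apply: ge_ereal_sup => d Ed; exact: Eset_ORR_ub.
  have K0 := adm'.1.
  case: (pselect (forall j, (j < n)%N -> exists t, active pi' t j)) => [allact|nall].
    have H : forall j, (j < n)%N -> forall s, exists u,
        (s <= u < s + pol_period pi')%N /\ active pi' u j.
      by move=> j jn; apply: all_active_window => //; exact: allact.
    rewrite (taustar_eq n0 K0 H w0 wle).
    exact: Eset_lb.
  have [j0 /not_implyP [j0n /forallNP hj0]] := (existsNP _).2 nall.
  rewrite (taustar_inf (w := w) n0 j0n (fun t => introN idP (hj0 t)) wpos).
  exact: leey.
Qed.
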